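(* Consider a population model with two biallelic causal variants (alleles $A_1,A_2$ and $B_1,B_2$) and a biallelic marker (alleles $M_1,M_2$), with ordered genotypes, in which the marker is in linkage disequilibrium with the first causal variant and in linkage equilibrium with the second causal variant. Let $\pi\in(0,1)$ be the probability that a random individual is a case, and let $\pi_{kl}$ be the probability of being a case given ordered genotype $(A_k,A_l)$ at the first causal variant, with $\pi_{12}=\pi_{21}$. Then for all $i,j\in\{1,2\}$, \[ \mathrm{P}(M_i M_j \mid A) \;=\; q_{ij} + D_{11ij}\frac{\pi_{11}-\pi_{12}}{\pi} + D_{22ij}\frac{\pi_{22}-\pi_{12}}{\pi}, \qquad \mathrm{P}(M_i M_j \mid U) \;=\; q_{ij} + D_{11ij}\frac{\pi_{12}-\pi_{11}}{1-\pi} + D_{22ij}\frac{\pi_{12}-\pi_{22}}{1-\pi}, \] where $D_{ijkl}=\mathrm{P}(A_iA_jM_kM_l)-\mathrm{P}(A_iA_j)\mathrm{P}(M_kM_l)$. Moreover, if Hardy–Weinberg equilibrium holds, then also $D_{ijkl}=\mathrm{P}(A_iM_k)\mathrm{P}(A_jM_l)-p_ip_jq_kq_l$.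
   Context: A random individual is drawn from a population. Each individual carries two ordered haplotypes (first and second), and at each of three loci (first causal variant with alleles $A_1,A_2$; second causal variant with alleles $B_1,B_2$; marker with alleles $M_1,M_2$) has an ordered genotype. The individual is either a case (event $A$, affected) or a control (event $U$, unaffected). $\mathrm{P}(A_kA_l)=p_{kl}$ is the probability of ordered genotype $(A_k,A_l)$ at the first causal variant, $\mathrm{P}(M_iM_j)=q_{ij}$ the probability of ordered marker genotype $(M_i,M_j)$, $p_i$ and $q_k$ the population frequencies of alleles $A_i$ and $M_k$, and $\mathrm{P}(A_iA_jM_kM_l)$ the probability that the individual has haplotypes $(A_i,M_k)$ (first) and $(A_j,M_l)$ (second); $\mathrm{P}(A_iM_k)$ denotes the population frequency of the haplotype $(A_i,M_k)$. $\mathrm{P}(M_iM_j\mid A)$ and $\mathrm{P}(M_iM_j\mid U)$ are the probabilities of marker genotype $(M_i,M_j)$ among cases and among controls. The marker is not causal: given the genotypes at the two causal variants, the case/control status is independent of the marker genotype. Linkage equilibrium of the marker with the second causal variant means that, given the genotype at the first causal variant, the marker genotype is independent of the genotype at the second causal variant. Hardy–Weinberg equilibrium means that the two haplotypes of an individual are independent, i.e. $\mathrm{P}(A_iA_jM_kM_l)=\mathrm{P}(A_iM_k)\mathrm{P}(A_jM_l)$ (so in particular $\mathrm{P}(A_iA_j)=p_ip_j$ and $q_{kl}=q_kq_l$). *)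

(* Defs.v *)
From mathcomp Require Import all_boot all_order all_algebra.
Set Implicit Arguments. Unset Strict Implicit. Unset Printing Implicit Defensive.
Import Order.TTheory GRing.Theory Num.Theory.
Local Open Scope ring_scope.

(* Alleles are encoded by 'I_2 : index 0 = allele 1 (A_1, B_1, M_1),
   index 1 = allele 2 (A_2, B_2, M_2). *)

Definition hap := ('I_2 * 'I_2 * 'I_2)%type.
Definition alA (h : hap) : 'I_2 := h.1.1.
Definition alB (h : hap) : 'I_2 := h.1.2.
Definition alM (h : hap) : 'I_2 := h.2.

(* An individual: (first haplotype, second haplotype), and case status
   (true = case / affected, event A; false = control / unaffected, event U). *)
Definition indiv := (hap * hap * bool)%type.
Definition hap1 (w : indiv) : hap := w.1.1.
Definition hap2 (w : indiv) : hap := w.1.2.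
Definition is_case (w : indiv) : bool := w.2.

Definition genoA (w : indiv) : 'I_2 * 'I_2 := (alA (hap1 w), alA (hap2 w)).
Definition genoB (w : indiv) : 'I_2 * 'I_2 := (alB (hap1 w), alB (hap2 w)).
Definition genoM (w : indiv) : 'I_2 * 'I_2 := (alM (hap1 w), alM (hap2 w)).

Section Prob.
Variable R : realFieldType.
Variable P : {ffun indiv -> R}.

Definition is_pmf : Prop := (forall w, 0 <= P w) /\ \sum_w P w = 1.

Definition Pr (E : pred indiv) : R := \sum_(w | E w) P w.
Definition Pcond (E F : pred indiv) : R := Pr (predI E F) / Pr F.

Definition cond_indep (TX TY TZ : eqType) (X : indiv -> TX) (Y : indiv -> TY)
    (Z : indiv -> TZ) : Prop :=
  forall x y z,
    Pr [pred w | (X w == x) && (Y w == y) && (Z w == z)] * Pr [pred w | Z w == z]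
    = Pr [pred w | (X w == x) && (Z w == z)] * Pr [pred w | (Y w == y) && (Z w == z)].

Definition pi_case : R := Pr is_case.
Definition pi_geno (k l : 'I_2) : R := Pcond is_case [pred w | genoA w == (k, l)].
Definition pA2 (k l : 'I_2) : R := Pr [pred w | genoA w == (k, l)].
Definition qM2 (i j : 'I_2) : R := Pr [pred w | genoM w == (i, j)].
Definition pAM (i j k l : 'I_2) : R :=
  Pr [pred w | (genoA w == (i, j)) && (genoM w == (k, l))].
Definition Dlink (i j k l : 'I_2) : R := pAM i j k l - pA2 i j * qM2 k l.

Definition PM_case (i j : 'I_2) : R := Pcond [pred w | genoM w == (i, j)] is_case.
Definition PM_ctrl (i j : 'I_2) : R :=
  Pcond [pred w | genoM w == (i, j)] [pred w | ~~ is_case w].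

Definition hapAM (i k : 'I_2) : R :=
  (Pr [pred w | (alA (hap1 w) == i) && (alM (hap1 w) == k)]
   + Pr [pred w | (alA (hap2 w) == i) && (alM (hap2 w) == k)]) / 2%:R.
Definition pA1 (i : 'I_2) : R :=
  (Pr [pred w | alA (hap1 w) == i] + Pr [pred w | alA (hap2 w) == i]) / 2%:R.
Definition qM1 (k : 'I_2) : R :=
  (Pr [pred w | alM (hap1 w) == k] + Pr [pred w | alM (hap2 w) == k]) / 2%:R.

(* Hardy-Weinberg equilibrium: the two haplotypes of an individual are independent. *)
Definition HWE : Prop :=
  forall i j k l : 'I_2, pAM i j k l = hapAM i k * hapAM j l.

End Prob.

(* Main.v *)
Require Import Defs.
From mathcomp Require Import all_boot all_order all_algebra ring.
Import Order.TTheory GRing.Theory Num.Theory.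
Local Open Scope ring_scope.
Lemma sum2 (R : realFieldType) (F : 'I_2 -> R) : \sum_(i < 2) F i = F 0 + F 1.
Proof. rewrite big_ord_recl big_ord1; congr (F _ + F _); exact/val_inj. Qed.

Lemma alg (R : fieldType) (q pi d00 d01 d10 d11 p00 p01 p10 p11 x00 x01 x10 x11 num : R) :
 pi != 0 -> 1 - pi != 0 ->
 num = (d00+p00*q)*x00 + (d01+p01*q)*x01 + ((d10+p10*q)*x10 + (d11+p11*q)*x11) ->
 q = (d00+p00*q)+(d01+p01*q)+((d10+p10*q)+(d11+p11*q)) ->
 1 = p00+p01+(p10+p11) ->
 pi = p00*x00+p01*x01+(p10*x10+p11*x11) ->
 x01 = x10 ->
 num/pi = q + d00*((x00-x01)/pi) + d11*((x11-x01)/pi) /\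
 (q - num)/(1 - pi) = q + d00*((x01-x00)/(1-pi)) + d11*((x01-x11)/(1-pi)).
Proof.
move=> pNZ qNZ Hn Hq H1 Hp Hx.
have e : q * (p00+p01+(p10+p11)) = q by rewrite -H1 mulr1.
have hs : d00 + d01 + d10 + d11 = 0.
  have -> : d00 + d01 + d10 + d11 = q - q * (p00+p01+(p10+p11)) by rewrite {1}Hq; ring.
  by rewrite e subrr.
have hd : d01 = - (d00 + d10 + d11).
  by apply/eqP; rewrite -subr_eq0 opprK -hs; apply/eqP; ring.
have hn : num = q * pi + d00 * (x00 - x01) + d11 * (x11 - x01).
  by rewrite Hn Hp -Hx hd; ring.
rewrite hn; split; field; by [].
Qed.

Section S.
Variable R : realFieldType.
Variable P : {ffun indiv -> R}.
Hypothesis P0 : forall w, 0 <= P w.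

Lemma Pr_ext (E F : pred indiv) : (forall w, E w = F w) -> Pr P E = Pr P F.
Proof. by move=> h; apply: eq_bigl. Qed.

Lemma Pr_ge0 E : 0 <= Pr P E.
Proof. by apply: sumr_ge0. Qed.

Lemma Pr_le (E F : pred indiv) : (forall w, E w -> F w) -> Pr P E <= Pr P F.
Proof.
move=> h; rewrite /Pr [X in _ <= X](bigID E) /=.
have -> : \sum_(i | F i && E i) P i = \sum_(i | E i) P i.
  by apply: eq_bigl => w; case: (boolP (E w)) => [/h ->|]; rewrite ?andbF.
by rewrite lerDl sumr_ge0.
Qed.

Lemma Pr0 (E F : pred indiv) : Pr P F = 0 -> (forall w, E w -> F w) -> Pr P E = 0.
Proof. by move=> h0 h; apply/eqP; rewrite eq_le Pr_ge0 -h0 Pr_le. Qed.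

Lemma Pr_part (T : finType) (f : indiv -> T) (E : pred indiv) :
  Pr P E = \sum_t Pr P [pred w | E w && (f w == t)].
Proof. by rewrite /Pr (partition_big f xpredT). Qed.

Lemma Pr_pair (f g : indiv -> 'I_2) (E : pred indiv) :
  Pr P E = \sum_x \sum_y Pr P [pred w | E w && ((f w, g w) == (x, y))].
Proof.
rewrite (Pr_part _ f); apply: eq_bigr => x _; rewrite (Pr_part _ g).
apply: eq_bigr => y _; apply: Pr_ext => w /=; by rewrite xpair_eqE andbA.
Qed.

Lemma stepb (a1 a2 k l : 'I_2) (b : 'I_2 * 'I_2) :
  cond_indep P is_case genoM (fun w => (genoA w, genoB w)) ->
  cond_indep P genoM genoB genoA ->
  Pr P [pred w | is_case w && (genoM w == (k, l)) && (genoA w == (a1, a2)) && (genoB w == b)]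
    * pA2 P a1 a2
  = Pr P [pred w | is_case w && (genoA w == (a1, a2)) && (genoB w == b)] * pAM P a1 a2 k l.
Proof.
move=> CI1 CI2.
set X := Pr P _. set C := Pr P [pred w | _ && _ && _].
set G := Pr P [pred w | (genoA w == (a1, a2)) && (genoB w == b)].
set Mb := Pr P [pred w | (genoM w == (k, l)) && (genoA w == (a1, a2)) && (genoB w == b)].
have h1 : X * G = C * Mb.
  have := CI1 true (k, l) ((a1, a2), b).
  rewrite /X /C /G /Mb.
  rewrite (Pr_ext [pred w | (is_case w == true) && _ && _]
                   [pred w | is_case w && (genoM w == (k, l)) && (genoA w == (a1, a2)) && (genoB w == b)]); last first.
    by move=> w /=; rewrite xpair_eqE eqb_id !andbA.
  rewrite (Pr_ext [pred w | (genoA w, genoB w) == ((a1, a2), b)] [pred w | (genoA w == (a1, a2)) && (genoB w == b)]); last first.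
    by move=> w /=; rewrite xpair_eqE.
  rewrite (Pr_ext [pred w | (is_case w == true) && _]
                   [pred w | is_case w && (genoA w == (a1, a2)) && (genoB w == b)]); last first.
    by move=> w /=; rewrite xpair_eqE eqb_id !andbA.
  rewrite (Pr_ext [pred w | (genoM w == (k, l)) && _]
                   [pred w | (genoM w == (k, l)) && (genoA w == (a1, a2)) && (genoB w == b)]) //.
    by move=> w /=; rewrite xpair_eqE !andbA.
have h2 : Mb * pA2 P a1 a2 = pAM P a1 a2 k l * G.
  have := CI2 (k, l) b (a1, a2).
  rewrite /Mb /G /pA2 /pAM.
  rewrite (Pr_ext [pred w | (genoM w == (k, l)) && (genoB w == b) && _]
                   [pred w | (genoM w == (k, l)) && (genoA w == (a1, a2)) && (genoB w == b)]); last first.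
    by move=> w /=; case: (genoM w == _); case: (genoB w == _); case: (genoA w == _).
  rewrite (Pr_ext [pred w | (genoM w == (k, l)) && (genoA w == (a1, a2))]
                   [pred w | (genoA w == (a1, a2)) && (genoM w == (k, l))]); last first.
    by move=> w /=; rewrite andbC.
  rewrite (Pr_ext [pred w | (genoB w == b) && _]
                   [pred w | (genoA w == (a1, a2)) && (genoB w == b)]) //.
    by move=> w /=; rewrite andbC.
have [G0|GNZ] := eqVneq G 0.
  rewrite /X /C (Pr0 _ _ G0); last by move=> w /= /andP [/andP [/andP [_ _] ->] ->].
  rewrite (Pr0 _ _ G0); last by move=> w /= /andP [/andP [_ ->] ->].
  by rewrite !mul0r.
apply: (mulIf GNZ).
have -> : X * pA2 P a1 a2 * G = (X * G) * pA2 P a1 a2 by ring.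
rewrite h1 -mulrA h2; ring.
Qed.
Lemma pig (a1 a2 : 'I_2) :
  pi_geno P a1 a2 = Pr P [pred w | is_case w && (genoA w == (a1, a2))] / pA2 P a1 a2.
Proof. by rewrite /pi_geno /Pcond; congr (_ / _); apply: Pr_ext. Qed.

Lemma caseA (a1 a2 : 'I_2) :
  Pr P [pred w | is_case w && (genoA w == (a1, a2))] = pA2 P a1 a2 * pi_geno P a1 a2.
Proof.
rewrite pig; have [p0|pNZ] := eqVneq (pA2 P a1 a2) 0.
  rewrite p0 mul0r; apply: (Pr0 _ _ p0) => w /= /andP [_ ->] //.
by rewrite mulrC divfK.
Qed.

Lemma step1 (a1 a2 k l : 'I_2) :
  cond_indep P is_case genoM (fun w => (genoA w, genoB w)) ->
  cond_indep P genoM genoB genoA ->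
  Pr P [pred w | is_case w && (genoM w == (k, l)) && (genoA w == (a1, a2))]
  = pAM P a1 a2 k l * pi_geno P a1 a2.
Proof.
move=> CI1 CI2.
have e : Pr P [pred w | is_case w && (genoM w == (k, l)) && (genoA w == (a1, a2))] * pA2 P a1 a2
   = Pr P [pred w | is_case w && (genoA w == (a1, a2))] * pAM P a1 a2 k l.
  rewrite (Pr_part _ genoB) [in RHS](Pr_part _ genoB) big_distrl big_distrl /=.
  apply: eq_bigr => b _; exact: stepb.
rewrite pig; have [p0|pNZ] := eqVneq (pA2 P a1 a2) 0.
  rewrite p0 invr0 !mulr0; apply: (Pr0 _ _ p0) => w /= /andP [_ ->] //.
apply: (mulIf pNZ); rewrite e -mulrA divfK //; ring.
Qed.
End S.

Lemma sumsum (R : realFieldType) (f g : 'I_2 -> R) :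
  \sum_k \sum_l f k * g l = (\sum_k f k) * (\sum_l g l).
Proof. by rewrite big_distrl; apply: eq_bigr => k _; rewrite big_distrr. Qed.

Theorem lemma1 (R : realFieldType) (P : {ffun indiv -> R}) :
  is_pmf P ->
  0 < pi_case P < 1 ->
  pi_geno P 0 1 = pi_geno P 1 0 ->
  (* the marker is not causal *)
  cond_indep P is_case genoM (fun w => (genoA w, genoB w)) ->
  (* linkage equilibrium of the marker with the second causal variant *)
  cond_indep P genoM genoB genoA ->
  (forall i j : 'I_2,
     PM_case P i j =
       qM2 P i j + Dlink P 0 0 i j * ((pi_geno P 0 0 - pi_geno P 0 1) / pi_case P)
                 + Dlink P 1 1 i j * ((pi_geno P 1 1 - pi_geno P 0 1) / pi_case P)
     /\
     PM_ctrl P i j =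
       qM2 P i j + Dlink P 0 0 i j * ((pi_geno P 0 1 - pi_geno P 0 0) / (1 - pi_case P))
                 + Dlink P 1 1 i j * ((pi_geno P 0 1 - pi_geno P 1 1) / (1 - pi_case P)))
  /\
  (HWE P -> forall i j k l : 'I_2,
     Dlink P i j k l = hapAM P i k * hapAM P j l - pA1 P i * pA1 P j * qM1 P k * qM1 P l).
Proof.
move=> [P0 Psum] /andP [pi0 pi1] pisym CI1 CI2; split.
  move=> k l.
  have Hnum : Pr P (predI [pred w | genoM w == (k, l)] is_case)
      = \sum_a1 \sum_a2 pAM P a1 a2 k l * pi_geno P a1 a2.
    rewrite (Pr_pair _ P (fun w => alA (hap1 w)) (fun w => alA (hap2 w))).
    apply: eq_bigr => a1 _; apply: eq_bigr => a2 _.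
    rewrite -(step1 _ P P0 a1 a2 k l CI1 CI2); apply: Pr_ext => w /=.
    by rewrite [_ && is_case w]andbC.
  have Hq : qM2 P k l = \sum_a1 \sum_a2 pAM P a1 a2 k l.
    rewrite /qM2 (Pr_pair _ P (fun w => alA (hap1 w)) (fun w => alA (hap2 w))).
    apply: eq_bigr => a1 _; apply: eq_bigr => a2 _.
    by apply: Pr_ext => w /=; rewrite andbC.
  have H1 : 1 = \sum_a1 \sum_a2 pA2 P a1 a2.
    rewrite -Psum (_ : \sum_w P w = Pr P xpredT) //.
    rewrite (Pr_pair _ P (fun w => alA (hap1 w)) (fun w => alA (hap2 w))).
    by apply: eq_bigr => a1 _; apply: eq_bigr => a2 _.
  have Hpi : pi_case P = \sum_a1 \sum_a2 pA2 P a1 a2 * pi_geno P a1 a2.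
    rewrite /pi_case (Pr_pair _ P (fun w => alA (hap1 w)) (fun w => alA (hap2 w))).
    by apply: eq_bigr => a1 _; apply: eq_bigr => a2 _; rewrite -(caseA _ P P0).
  have Hctrl : Pr P (predI [pred w | genoM w == (k, l)] [pred w | ~~ is_case w])
      = qM2 P k l - Pr P (predI [pred w | genoM w == (k, l)] is_case).
    rewrite /qM2 [X in _ = X - _](Pr_part _ P _ is_case) big_bool /=.
    rewrite (Pr_ext _ _ (predI _ is_case) [pred w | (genoM w == (k, l)) && (is_case w == true)]); last first.
      by move=> w /=; case: (is_case w); rewrite ?andbT ?andbF.
    rewrite addrC addrK.
    apply: Pr_ext => w /=; by case: (is_case w); rewrite ?andbT ?andbF.
  have hD : forall a1 a2, pAM P a1 a2 k l = Dlink P a1 a2 k l + pA2 P a1 a2 * qM2 P k l.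
    by move=> a1 a2; rewrite /Dlink subrK.
  rewrite !sum2 !hD in Hnum Hq.
  rewrite !sum2 in H1 Hpi.
  rewrite /PM_case /PM_ctrl /Pcond Hctrl -/(pi_case P).
  have -> : Pr P [pred w | ~~ is_case w] = 1 - pi_case P.
    rewrite -Psum /pi_case (_ : \sum_w P w = Pr P xpredT) //.
    rewrite [X in _ = X - _](Pr_part _ P _ is_case) big_bool /=.
    rewrite (Pr_ext _ _ is_case [pred w | xpredT w && (is_case w == true)]); last first.
      by move=> w /=; case: (is_case w).
    rewrite addrC addrK.
    apply: Pr_ext => w /=; by case: (is_case w).
  apply: (alg _ _ _ _ _ _ _ _ _ _ _ _ _ _ _ _ _ _ Hnum Hq H1 Hpi pisym).
    by rewrite gt_eqF.
  by rewrite subr_eq0 eq_sym lt_eqF.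
move=> hwe i j k l.
have sA : forall i, \sum_k hapAM P i k = pA1 P i.
  move=> i'; rewrite /hapAM -big_distrl big_split /pA1; congr (_ / _).
  rewrite [X in _ = X + _](Pr_part _ P _ (fun w => alM (hap1 w))).
  rewrite [X in _ = _ + X](Pr_part _ P _ (fun w => alM (hap2 w))) //.
have sM : forall k, \sum_i hapAM P i k = qM1 P k.
  move=> k'; rewrite /hapAM -big_distrl big_split /qM1; congr (_ / _).
  rewrite [X in _ = X + _](Pr_part _ P _ (fun w => alA (hap1 w))).
  rewrite [X in _ = _ + X](Pr_part _ P _ (fun w => alA (hap2 w))).
  by congr (_ + _); apply: eq_bigr => a _; apply: Pr_ext => w /=; rewrite andbC.
have eA : pA2 P i j = pA1 P i * pA1 P j.
  rewrite -!sA -sumsum /pA2 (Pr_pair _ P (fun w => alM (hap1 w)) (fun w => alM (hap2 w))).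
  apply: eq_bigr => a _; apply: eq_bigr => b _; rewrite -hwe; by apply: Pr_ext.
have eM : qM2 P k l = qM1 P k * qM1 P l.
  rewrite -!sM -sumsum /qM2 (Pr_pair _ P (fun w => alA (hap1 w)) (fun w => alA (hap2 w))).
  apply: eq_bigr => a _; apply: eq_bigr => b _; rewrite -hwe.
  by apply: Pr_ext => w /=; rewrite andbC.
rewrite /Dlink hwe eA eM; ring.
Qed.
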